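(* Let $p$ be an odd prime and let $a\in\mathbb{F}_p$ with $a^5\not\equiv a \pmod p$. Let $E/\mathbb{F}_p$ be the elliptic curve given by the Edwards model $X^2+Y^2=a^2(1+X^2Y^2)$. Then \[|E(\mathbb{F}_p)|=1+p+p\cdot{_2F_1}\left(\begin{matrix}\phi&\phi \\ {} & \epsilon\end{matrix}\Big| 1-a^4\right).\]
   Context: $|E(\mathbb{F}_p)|$ is the number of $\mathbb{F}_p$-rational points of the elliptic curve (the smooth projective curve birational to the given affine model). Multiplicative characters $\chi$ of $\mathbb{F}_p^\times$ are extended by $\chi(0)=0$; $\epsilon$ is the trivial and $\phi$ the quadratic character; $\overline{\chi}=1/\chi$. For characters $A,B$: ${A\choose B}:=\frac{B(-1)}{p}\sum_{x\in\mathbb{F}_p}A(x)\overline{B}(1-x)$. The Gaussian hypergeometric series is \[{_2F_1}\left(\begin{matrix}\phi&\phi \\ {} & \epsilon\end{matrix}\Big| x\right):=\frac{p}{p-1}\sum_{\chi}{\phi\chi\choose\chi}{\phi\chi\choose\chi}\chi(x),\] the sum running over all multiplicative characters $\chi$ of $\mathbb{F}_p$. *)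

(* Defs.v *)
From HB Require Import structures.
From mathcomp Require Import all_boot all_order all_algebra all_fingroup all_solvable all_field all_character.
Set Implicit Arguments. Unset Strict Implicit. Unset Printing Implicit Defensive.
Import GRing.Theory Num.Theory.
Local Open Scope ring_scope.

(* Multiplicative characters of F_p^x, valued in algC, extended by chi(0)=0.
   The characters of the (abelian) finite group {unit 'F_p} are exactly its
   irreducible characters 'chi_i, i : Iirr [set: {unit 'F_p}]. *)
Definition FpUnits (p : nat) := [set: {unit 'F_p}]%G.

Definition mchar (p : nat) (i : Iirr (FpUnits p)) : 'F_p -> algC :=
  fun x => if @insub _ (fun y : 'F_p => y \is a GRing.unit) {unit 'F_p} x is Some u
           then 'chi_i u else 0.

Definition qchar (p : nat) : 'F_p -> algC :=
  fun x => if x == 0 then 0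
           else if [exists y : 'F_p, y ^+ 2 == x] then 1 else -1.

(* binomial coefficient of characters:
   (A choose B) = B(-1)/p * sum_x A(x) * Bbar(1-x), with Bbar = 1/B (and Bbar(0)=0) *)
Definition char_binom (p : nat) (A B : 'F_p -> algC) : algC :=
  B (-1) / p%:R * \sum_(x : 'F_p) A x * (B (1 - x))^-1.

Definition F21 (p : nat) (x : 'F_p) : algC :=
  p%:R / (p%:R - 1) *
  \sum_(i : Iirr (FpUnits p))
     char_binom (fun y => qchar y * mchar i y) (mchar i)
   * char_binom (fun y => qchar y * mchar i y) (mchar i)
   * mchar i x.

Definition edwards_affine_count (p : nat) (a : 'F_p) : nat :=
  #|[set P : 'F_p * 'F_p | P.1 ^+ 2 + P.2 ^+ 2 == a ^+ 2 * (1 + P.1 ^+ 2 * P.2 ^+ 2)]|.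

(* F_p-points of the smooth projective model lying over the two points at
   infinity (1:0:0) and (0:1:0) of the projective closure
   X^2 Z^2 + Y^2 Z^2 = a^2 (Z^4 + X^2 Y^2).  Each is an ordinary double point
   whose tangent cone is Z^2 - a^2 W^2 (W = Y resp. X); the rational points of
   the normalization above it correspond to the F_p-rational tangent
   directions (W:Z) = (1:t) with t^2 = a^2. *)
Definition edwards_infinity_count (p : nat) (a : 'F_p) : nat :=
  2 * #|[set t : 'F_p | t ^+ 2 == a ^+ 2]|.

Definition edwards_card (p : nat) (a : 'F_p) : nat :=
  edwards_affine_count a + edwards_infinity_count a.

(* Main.v *)
Require Import Defs.
From HB Require Import structures.
From mathcomp Require Import all_boot all_order all_algebra all_fingroup all_solvable all_field all_character.
From mathcomp Require Import ring zify.
Import GRing.Theory Num.Theory.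
Local Open Scope ring_scope.
Set Implicit Arguments. Unset Strict Implicit.


Lemma Fp_card_units p (hp : prime p) : #|[set: {unit 'F_p}]| = p.-1.
Proof. by rewrite card_finField_unit card_Fp. Qed.

Lemma fermat p (hp : prime p) (x : 'F_p) : x != 0 -> x ^+ p.-1 = 1.
Proof.
move=> x0; have p0 : (0 < p)%N := prime_gt0 hp.
have : x ^+ (1 + p.-1) = x by rewrite add1n prednK // -{2}(expf_card x) card_Fp.
rewrite exprD expr1 => e; apply: (mulfI x0); by rewrite e mulr1.
Qed.

Lemma half_prop p (hp : prime p) (hodd : odd p) : p.-1 = (p.-1./2).*2 /\ (0 < p.-1./2)%N.
Proof.
have p0 : (0 < p)%N := prime_gt0 hp.
have p2 : (2 < p)%N.
  have := prime_gt1 hp; rewrite leq_eqVlt => /orP[/eqP p2|//].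
  by move: hodd; rewrite -p2.
have e : ~~ odd p.-1 by move: hodd; rewrite -{1}(prednK p0) /=; case: (odd _).
split; first by rewrite -{1}(odd_double_half p.-1) (negbTE e).
rewrite half_gt0; move: p2; clear; lia.
Qed.

Lemma euler p (hp : prime p) (hodd : odd p) (x : 'F_p) : x != 0 ->
  [exists y : 'F_p, y ^+ 2 == x] = (x ^+ (p.-1./2) == 1).
Proof.
move=> x0; have [eh h0] := half_prop hp hodd.
move: eh h0; set h := p.-1./2 => eh h0.
apply/existsP/eqP.
  case=> y /eqP yx; have y0 : y != 0 by apply: contraNneq x0 => y0; rewrite -yx y0 expr0n.
  by rewrite -yx -exprM mul2n -eh fermat.
move=> xh.
have xU : x \is a GRing.unit by rewrite unitfE.
pose u : {unit 'F_p} := Sub x xU.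
have [g Gg] := cyclicP (field_unit_group_cyclic [set: {unit 'F_p}]%G).
have ug : u \in <[g]>%g by rewrite -Gg inE.
have og : #[g]%g = p.-1 by rewrite orderE -Gg Fp_card_units.
case/cycleP: ug => k uk.
have : (u ^+ h)%g == 1%g.
  by apply/eqP/val_inj; rewrite FinRing.val_unitX /= xh.
rewrite uk -expgM -order_dvdn og eh -mul2n dvdn_pmul2r // => /dvdnP[m km].
exists (val (g ^+ m)%g); rewrite -FinRing.val_unitX -expgM -km -uk //.
Qed.

Lemma two_neq0 p (hp : prime p) (hodd : odd p) : (2%:R : 'F_p) != 0.
Proof.
rewrite -(dvdn_pcharf (pchar_Fp hp)); apply/negP => /(dvdn_leq (isT : (0 < 2)%N)) p2.
have p1 := prime_gt1 hp.
have p2' : p = 2%N by apply/eqP; rewrite eqn_leq p2 p1.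
by move: hodd; rewrite p2'.
Qed.

Lemma m1_neq1 p (hp : prime p) (hodd : odd p) : (-1 : 'F_p) != 1.
Proof.
apply: contra (two_neq0 hp hodd) => /eqP e.
by rewrite mulr2n -{1}e addNr.
Qed.

Lemma powh_pm1 p (hp : prime p) (hodd : odd p) (x : 'F_p) : x != 0 ->
  (x ^+ (p.-1./2) == 1) || (x ^+ (p.-1./2) == -1).
Proof.
move=> x0; have [eh h0] := half_prop hp hodd.
by rewrite -sqrf_eq1 -exprM muln2 -eh fermat.
Qed.

Lemma qchar0 p : qchar (0 : 'F_p) = 0.
Proof. by rewrite /qchar eqxx. Qed.

Lemma qcharE p (hp : prime p) (hodd : odd p) (x : 'F_p) : x != 0 ->
  qchar x = if x ^+ (p.-1./2) == 1 then 1 else -1.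
Proof. by move=> x0; rewrite /qchar (negbTE x0) euler. Qed.

Lemma qchar_sq p (x : 'F_p) : x != 0 -> qchar (x ^+ 2) = 1.
Proof.
move=> x0; rewrite /qchar expf_eq0 (negbTE x0) andbF.
by case: existsP => // -[]; exists x.
Qed.

Lemma qcharM p (hp : prime p) (hodd : odd p) (x y : 'F_p) :
  qchar (x * y) = qchar x * qchar y.
Proof.
have [->|x0] := eqVneq x 0; first by rewrite mul0r qchar0 mul0r.
have [->|y0] := eqVneq y 0; first by rewrite mulr0 qchar0 mulr0.
have xy0 : x * y != 0 by rewrite mulf_neq0.
rewrite !qcharE // exprMn.
have m1 := m1_neq1 hp hodd.
case/orP: (powh_pm1 hp hodd x0) => /eqP ->; case/orP: (powh_pm1 hp hodd y0) => /eqP ->;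
 rewrite ?mulr1 ?mul1r ?mulrNN ?mulr1 ?eqxx ?(negbTE m1) //=;
 by rewrite mulrNN mulr1.
Qed.

Lemma qchar_pm1 p (hp : prime p) (hodd : odd p) (x : 'F_p) : x != 0 ->
  qchar x * qchar x = 1.
Proof. by move=> x0; rewrite -qcharM // -expr2 qchar_sq. Qed.

Lemma qcharV p (hp : prime p) (hodd : odd p) (x : 'F_p) : qchar x^-1 = qchar x.
Proof.
have [->|x0] := eqVneq x 0; first by rewrite invr0.
have : qchar x^-1 * qchar x = 1 by rewrite -qcharM // mulVf // -(expr1n _ 2) qchar_sq ?oner_neq0.
move=> e; rewrite -[qchar x^-1]mulr1 -(qchar_pm1 hp hodd x0) mulrA e mul1r //.
Qed.

Lemma nonsquare p (hp : prime p) (hodd : odd p) : exists n : 'F_p, qchar n = -1.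
Proof.
have [eh h0] := half_prop hp hodd.
move: eh h0; set h := p.-1./2 => eh h0.
have [g Gg] := cyclicP (field_unit_group_cyclic [set: {unit 'F_p}]%G).
have og : #[g]%g = p.-1 by rewrite orderE -Gg Fp_card_units.
have g0 : val g != 0 by rewrite -unitfE (valP g).
exists (val g); rewrite qcharE //; case: ifP => // /eqP gh.
have : (g ^+ h)%g == 1%g by apply/eqP/val_inj; rewrite FinRing.val_unitX /= gh.
rewrite -order_dvdn og eh => /(dvdn_leq h0); rewrite -addnn; lia.
Qed.

Lemma qchar_sum p (hp : prime p) (hodd : odd p) : \sum_(x : 'F_p) qchar x = 0.
Proof.
have [n qn] := nonsquare hp hodd.
have n0 : n != 0 by apply/eqP => n0; move: qn; rewrite n0 qchar0 => /eqP; rewrite eq_sym oppr_eq0 oner_eq0.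
have e : \sum_(x : 'F_p) qchar x = \sum_(x : 'F_p) qchar (n * x).
  by rewrite (reindex_inj (mulfI n0)).
have e2 : \sum_(x : 'F_p) qchar (n * x) = qchar n * \sum_(x : 'F_p) qchar x.
  by rewrite mulr_sumr; apply: eq_bigr => x _; rewrite qcharM.
move: e; rewrite e2 qn mulN1r => /eqP; rewrite -addr_eq0 -mulr2n mulrn_eq0 /= => /eqP //.
Qed.

Lemma card_sqrt p (hp : prime p) (hodd : odd p) (w : 'F_p) :
  (#|[set t : 'F_p | t ^+ 2 == w]|%:R : algC) = 1 + qchar w.
Proof.
have [->|w0] := eqVneq w 0.
  have -> : [set t : 'F_p | t ^+ 2 == 0] = [set 0].
    by apply/setP => t; rewrite !inE sqrf_eq0.
  by rewrite cards1 qchar0 addr0.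
rewrite /qchar (negbTE w0); case: existsP => [[s /eqP hs]|hn].
  have -> : [set t : 'F_p | t ^+ 2 == w] = [set s; -s].
    by apply/setP => t; rewrite !inE -hs eqf_sqr.
  have s0 : s != 0 by apply: contraNneq w0 => s0; rewrite -hs s0 expr0n.
  have sn : s != -s.
    apply: contra s0 => /eqP e; have : s + s == 0 by rewrite {2}e subrr.
    by rewrite -mulr2n -mulr_natl mulf_eq0 (negbTE (two_neq0 hp hodd)).
  by rewrite cards2 sn.
have -> : [set t : 'F_p | t ^+ 2 == w] = set0.
  by apply/setP => t; rewrite !inE; apply/negbTE/negP => ht; apply: hn; exists t.
by rewrite cards0 subrr.
Qed.

Lemma card_setR (T : finType) (P : pred T) :
  (#|[set t | P t]|%:R : algC) = \sum_t (P t)%:R.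
Proof.
rewrite -sum1_card natr_sum big_mkcond /=; apply: eq_bigr => t _.
by rewrite inE; case: (P t).
Qed.

Lemma sum_sq p (hp : prime p) (hodd : odd p) (f : 'F_p -> algC) :
  \sum_(y : 'F_p) f (y ^+ 2) = \sum_(u : 'F_p) f u * (1 + qchar u).
Proof.
under [RHS]eq_bigr do rewrite -card_sqrt // card_setR mulr_sumr.
rewrite exchange_big /=; apply: eq_bigr => t _.
rewrite (bigD1 (t ^+ 2)) //= eqxx mulr1 big1 ?addr0 // => u /negbTE.
by rewrite eq_sym => ->; rewrite mulr0.
Qed.

Lemma quad_sum p (hp : prime p) (hodd : odd p) (r s : 'F_p) : r != s ->
  \sum_(u : 'F_p) qchar ((u - r) * (u - s)) = -1.
Proof.
move=> rs; set d := r - s.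
have d0 : d != 0 by rewrite subr_eq0.
rewrite (reindex_inj (addIr r)) /=.
have e1 : forall v, (v + r - r) * (v + r - s) = v * (v + d).
  by move=> v; rewrite addrK /d addrA.
under eq_bigr do rewrite e1.
have hinj : injective (fun v : 'F_p => 1 + d * v).
  by move=> a b /addrI /(mulfI d0).
have := qchar_sum hp hodd; rewrite (reindex_inj hinj) /= => S0.
have S1 : \sum_(v : 'F_p) qchar (1 + d * v^-1) = 0.
  by rewrite (reindex_inj invr_inj) /=; under eq_bigr do rewrite invrK.
rewrite (bigD1 0) //= mul0r qchar0 add0r.
move: S1; rewrite (bigD1 0) //= invr0 mulr0 addr0 (_ : qchar 1 = 1).
  move=> /eqP; rewrite addrC addr_eq0 => /eqP <-.
  apply: eq_bigr => v v0.
  have -> : v * (v + d) = v ^+ 2 * (1 + d * v^-1).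
    by field.
  by rewrite qcharM // qchar_sq // mul1r.
by rewrite -(expr1n _ 2) qchar_sq ?oner_neq0.
Qed.



Lemma units_abelian p : abelian (FpUnits p).
Proof.
apply/centsP => x _ y _; apply/val_inj.
rewrite (FinRing.val_unitM x y) (FinRing.val_unitM y x).
exact: mulrC.
Qed.

Lemma lin_chi p (i : Iirr (FpUnits p)) : 'chi_i \is a linear_char.
Proof. exact: (char_abelianP _ (units_abelian p)). Qed.

Lemma mcharU p (i : Iirr (FpUnits p)) (u : {unit 'F_p}) : mchar i (val u) = 'chi_i u.
Proof. by rewrite /mchar valK. Qed.

Lemma mchar0 p (i : Iirr (FpUnits p)) : mchar i 0 = 0.
Proof. by rewrite /mchar insubN // unitr0. Qed.

Lemma mcharM p (i : Iirr (FpUnits p)) (x y : 'F_p) :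
  mchar i (x * y) = mchar i x * mchar i y.
Proof.
have [->|x0] := eqVneq x 0; first by rewrite mul0r mchar0 mul0r.
have [->|y0] := eqVneq y 0; first by rewrite mulr0 mchar0 mulr0.
have xU : x \is a GRing.unit by rewrite unitfE.
have yU : y \is a GRing.unit by rewrite unitfE.
pose u : {unit 'F_p} := Sub x xU; pose v : {unit 'F_p} := Sub y yU.
have -> : x * y = val (u * v)%g by rewrite FinRing.val_unitM.
rewrite mcharU (lin_charM (lin_chi i)) ?inE //.
by rewrite -!mcharU.
Qed.

Lemma mchar1 p (i : Iirr (FpUnits p)) : mchar i 1 = 1.
Proof.
have -> : (1 : 'F_p) = val (1%g : {unit 'F_p}) by [].
by rewrite mcharU lin_char1 // lin_chi.
Qed.

Lemma mcharV p (i : Iirr (FpUnits p)) (x : 'F_p) : mchar i x^-1 = (mchar i x)^-1.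
Proof.
have [->|x0] := eqVneq x 0; first by rewrite invr0 mchar0 invr0.
have e : mchar i x^-1 * mchar i x = 1 by rewrite -mcharM mulVf // mchar1.
have c0 : mchar i x != 0 by apply: contra_eq_neq e => ->; rewrite mulr0 eq_sym oner_neq0.
by apply: (mulIf c0); rewrite e mulVf.
Qed.

Lemma mchar_sum p (hp : prime p) (x : 'F_p) :
  \sum_(i : Iirr (FpUnits p)) mchar i x = (p.-1)%:R *+ (x == 1).
Proof.
have [->|x0] := eqVneq x 0.
  rewrite big1; last by move=> i _; rewrite mchar0.
  by rewrite eq_sym oner_eq0.
have xU : x \is a GRing.unit by rewrite unitfE.
pose u : {unit 'F_p} := Sub x xU.
have -> : x = val u by [].
under eq_bigr do rewrite mcharU.
have H := second_orthogonality_relation u (group1 (FpUnits p)).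
rewrite (eq_bigr (fun i => 'chi_i u)) in H; last first.
  move=> i _. rewrite (lin_char1 (lin_chi i)). by rewrite conjC1 mulr1.
rewrite H class1G inE.
have -> : (val u == 1) = (u == 1%g).
  by apply/eqP/eqP => [e|->//]; apply: val_inj.
have [->|] := eqVneq u 1%g; last by rewrite !mulr0n.
congr (_ *+ _); congr (_%:R).
have -> : 'C_(FpUnits p)[1%g]%g = FpUnits p by rewrite cent11T setIT.
by rewrite Fp_card_units.
Qed.


Lemma fiber p (hp : prime p) (hodd : odd p) (a Y : 'F_p) (a4 : a ^+ 4 != 1) :
  \sum_(X : 'F_p) (X ^+ 2 + Y ^+ 2 == a ^+ 2 * (1 + X ^+ 2 * Y ^+ 2))%:R
  = 1 + qchar ((a ^+ 2 - Y ^+ 2) * (1 - a ^+ 2 * Y ^+ 2)) - (a ^+ 2 * Y ^+ 2 == 1)%:R :> algC.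
Proof.
have [c0|c0] := eqVneq (1 - a ^+ 2 * Y ^+ 2) 0.
  rewrite c0 mulr0 qchar0 addr0.
  have -> : (a ^+ 2 * Y ^+ 2 == 1) by rewrite eq_sym -subr_eq0 c0.
  rewrite subrr big1 // => X _.
  suff -> : (X ^+ 2 + Y ^+ 2 == a ^+ 2 * (1 + X ^+ 2 * Y ^+ 2)) = false by [].
  apply/negbTE; rewrite -subr_eq0.
  have -> : X ^+ 2 + Y ^+ 2 - a ^+ 2 * (1 + X ^+ 2 * Y ^+ 2)
     = X ^+ 2 * (1 - a ^+ 2 * Y ^+ 2) + (Y ^+ 2 - a ^+ 2) by ring.
  rewrite c0 mulr0 add0r subr_eq0; apply: contra a4 => /eqP e.
  have : a ^+ 2 * Y ^+ 2 = 1 by apply/eqP; rewrite eq_sym -subr_eq0 c0.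
  by rewrite e => h; rewrite -h; apply/eqP; ring.
have -> : (a ^+ 2 * Y ^+ 2 == 1) = false.
  by apply/negbTE; apply: contra c0 => /eqP ->; rewrite subrr.
rewrite subr0.
set w := (a ^+ 2 - Y ^+ 2) / (1 - a ^+ 2 * Y ^+ 2).
have e : forall X : 'F_p, (X ^+ 2 + Y ^+ 2 == a ^+ 2 * (1 + X ^+ 2 * Y ^+ 2)) = (X ^+ 2 == w).
  move=> X; rewrite -subr_eq0.
  have -> : X ^+ 2 + Y ^+ 2 - a ^+ 2 * (1 + X ^+ 2 * Y ^+ 2)
     = (1 - a ^+ 2 * Y ^+ 2) * (X ^+ 2 - w).
    by rewrite /w; field; rewrite exprMn.
  by rewrite mulf_eq0 (negbTE c0) subr_eq0.
under eq_bigr do rewrite e.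
rewrite -card_setR card_sqrt // /w qcharM // qcharV // -qcharM //.
Qed.

Lemma affine_sum p (hp : prime p) (hodd : odd p) (a : 'F_p) (a0 : a != 0) (a4 : a ^+ 4 != 1) :
  (edwards_affine_count a)%:R = p%:R - 2 + \sum_(Y : 'F_p) qchar ((a ^+ 2 - Y ^+ 2) * (1 - a ^+ 2 * Y ^+ 2)) :> algC.
Proof.
rewrite /edwards_affine_count card_setR.
transitivity (\sum_(X : 'F_p) \sum_(Y : 'F_p)
   (X ^+ 2 + Y ^+ 2 == a ^+ 2 * (1 + X ^+ 2 * Y ^+ 2))%:R : algC).
  by rewrite pair_big /=.
rewrite exchange_big /=.
under eq_bigr do rewrite fiber //.
rewrite sumrB big_split /= sumr_const card_Fp //.
have e : forall Y : 'F_p, (a ^+ 2 * Y ^+ 2 == 1) = (Y ^+ 2 == a^-1 ^+ 2).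
  move=> Y; apply/eqP/eqP => h.
    by apply: (mulfI (expf_neq0 2 a0)); rewrite h exprVn mulfV // expf_neq0.
  by rewrite h exprVn mulfV // expf_neq0.
under [X in _ - X]eq_bigr do rewrite e.
rewrite -card_setR card_sqrt // qchar_sq ?invr_eq0 //.
by rewrite addrAC -addrA.
Qed.

Lemma quartic_sum p (hp : prime p) (hodd : odd p) (a : 'F_p) (a0 : a != 0) (a4 : a ^+ 4 != 1) :
  \sum_(Y : 'F_p) qchar ((a ^+ 2 - Y ^+ 2) * (1 - a ^+ 2 * Y ^+ 2))
  = -1 + \sum_(y : 'F_p) qchar (y * (1 - y) * (1 - a ^+ 4 * y)).
Proof.
have a2 : a ^+ 2 != 0 by rewrite expf_neq0.
rewrite (sum_sq hp hodd (fun u => qchar ((a ^+ 2 - u) * (1 - a ^+ 2 * u)))) /=.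
under eq_bigr do rewrite mulrDr mulr1.
rewrite big_split /=; congr (_ + _).
  rewrite -(quad_sum hp hodd (r := a ^+ 2) (s := (a ^+ 2)^-1)).
    apply: eq_bigr => u _.
    have -> : (a ^+ 2 - u) * (1 - a ^+ 2 * u) = a ^+ 2 * ((u - a ^+ 2) * (u - (a ^+ 2)^-1)).
      by field.
    by rewrite qcharM // qchar_sq // mul1r.
  apply: contra a4 => /eqP e.
  by rewrite (_ : 4 = 2 + 2)%N // exprD {1}e mulVf.
rewrite (reindex_inj (mulfI a2)) /=; apply: eq_bigr => y _.
rewrite -qcharM //.
have -> : (a ^+ 2 - a ^+ 2 * y) * (1 - a ^+ 2 * (a ^+ 2 * y)) * (a ^+ 2 * y)
  = (a ^+ 2) ^+ 2 * (y * (1 - y) * (1 - a ^+ 4 * y)) by ring.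
by rewrite qcharM // qchar_sq // mul1r.
Qed.

Lemma card_formula p (hp : prime p) (hodd : odd p) (a : 'F_p) (a0 : a != 0) (a4 : a ^+ 4 != 1) :
  (edwards_card a)%:R = 1 + p%:R + \sum_(y : 'F_p) qchar (y * (1 - y) * (1 - a ^+ 4 * y)) :> algC.
Proof.
rewrite /edwards_card natrD affine_sum // quartic_sum // /edwards_infinity_count natrM.
rewrite card_sqrt // qchar_sq //.
set T := \sum_(y : 'F_p) _.
rewrite -[2%:R]/(1 + 1 : algC). ring.
Qed.


Lemma fiber2 p (hp : prime p) (hodd : odd p) (a y : 'F_p) (a4 : a ^+ 4 != 1) :
  qchar y * \sum_(z : 'F_p) qchar z * (y * (1 - y)^-1 * (z * (1 - z)^-1) * (1 - a ^+ 4) == 1)%:R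
  = qchar (y * (1 - y) * (1 - a ^+ 4 * y)).
Proof.
have [->|y0] := eqVneq y 0.
  by rewrite !mul0r /qchar eqxx.
have [->|y1] := eqVneq y 1.
  rewrite subrr invr0 !(mulr0, mul0r) qchar0 big1 ?mulr0 // => z _.
  by rewrite !mul0r eq_sym oner_eq0 mulr0.
have y1' : 1 - y != 0 by rewrite subr_eq0 eq_sym.
set d := 1 - a ^+ 4 * y.
have ew : forall z : 'F_p, z != 1 ->
    (y * (1 - y)^-1 * (z * (1 - z)^-1) * (1 - a ^+ 4) == 1) = (z * d == 1 - y).
  move=> z z1; have z1' : 1 - z != 0 by rewrite subr_eq0 eq_sym.
  rewrite -subr_eq0 -[in RHS]subr_eq0.
  have -> : y * (1 - y)^-1 * (z * (1 - z)^-1) * (1 - a ^+ 4) - 1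
     = (z * d - (1 - y)) / ((1 - y) * (1 - z)).
    by rewrite /d; field; rewrite z1' y1'.
  by rewrite mulf_eq0 invr_eq0 mulf_eq0 (negbTE y1') (negbTE z1') !orbF.
have e1 : (y * (1 - y)^-1 * (1 * (1 - 1)^-1) * (1 - a ^+ 4) == 1) = false.
  by rewrite subrr invr0 !mulr0 mul0r eq_sym oner_eq0.
have [d0|d0] := eqVneq d 0.
  rewrite d0 mulr0 qchar0 big1 ?mulr0 // => z _.
  have [->|z1] := eqVneq z 1; first by rewrite e1 mulr0.
  by rewrite ew // d0 mulr0 eq_sym (negbTE y1') mulr0.
set z0 := (1 - y) / d.
have ew2 : forall z : 'F_p, (y * (1 - y)^-1 * (z * (1 - z)^-1) * (1 - a ^+ 4) == 1) = (z == z0).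
  move=> z; have [->|z1] := eqVneq z 1.
    rewrite e1; apply/esym/negbTE; rewrite /z0 eq_sym.
    apply/eqP => h; have : (1 - y) = d.
      by move: h => /(congr1 (fun t => t * d)); rewrite mul1r mulfVK // => ->.
    move/eqP; rewrite -subr_eq0 (_ : 1 - y - d = y * (a ^+ 4 - 1)); last by rewrite /d; ring.
    by rewrite mulf_eq0 (negbTE y0) subr_eq0 (negbTE a4).
  rewrite ew // /z0; apply/eqP/eqP => [<-|->]; [by rewrite mulfK | by rewrite mulfVK].
under eq_bigr do rewrite ew2.
rewrite (bigD1 z0) //= eqxx mulr1 big1 ?addr0; last first.
  by move=> z /negbTE ->; rewrite mulr0.
rewrite /z0 [qchar ((1 - y) / d)]qcharM // qcharV // mulrA.
by rewrite -!qcharM.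
Qed.

Lemma binom_eq p (i : Iirr (FpUnits p)) :
  char_binom (fun y => qchar y * mchar i y) (mchar i)
  = mchar i (-1) / p%:R * \sum_(y : 'F_p) qchar y * mchar i (y * (1 - y)^-1).
Proof.
rewrite /char_binom; congr (_ * _); apply: eq_bigr => y _.
by rewrite mcharM mcharV mulrA.
Qed.

Lemma term_eq p (hp : prime p) (i : Iirr (FpUnits p)) (x : 'F_p) :
  char_binom (fun y => qchar y * mchar i y) (mchar i)
  * char_binom (fun y => qchar y * mchar i y) (mchar i) * mchar i x
  = (p%:R ^+ 2)^-1 * \sum_(y : 'F_p) \sum_(z : 'F_p)
      qchar y * qchar z * mchar i (y * (1 - y)^-1 * (z * (1 - z)^-1) * x).
Proof.
have p0 : (p%:R : algC) != 0 by rewrite pnatr_eq0 -lt0n prime_gt0.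
rewrite binom_eq.
have cc : mchar i (-1) * mchar i (-1) = 1 by rewrite -mcharM mulrNN mulr1 mchar1.
set S := \sum_(y : 'F_p) qchar y * mchar i (y * (1 - y)^-1).
have -> : mchar i (-1) / p%:R * S * (mchar i (-1) / p%:R * S) * mchar i x
   = (mchar i (-1) * mchar i (-1)) * (p%:R ^+ 2)^-1 * (S * (S * mchar i x)).
  by field.
rewrite cc mul1r; congr (_ * _).
rewrite /S mulr_suml; apply: eq_bigr => y _.
rewrite mulr_suml mulr_sumr; apply: eq_bigr => z _.
rewrite !mcharM; ring.
Qed.

Lemma pF21 p (hp : prime p) (hodd : odd p) (x : 'F_p) :
  p%:R * F21 x = \sum_(y : 'F_p) \sum_(z : 'F_p)
     qchar y * qchar z * (y * (1 - y)^-1 * (z * (1 - z)^-1) * x == 1)%:R.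
Proof.
have p0 : (p%:R : algC) != 0 by rewrite pnatr_eq0 -lt0n prime_gt0.
have p1 : (p%:R - 1 : algC) != 0.
  by rewrite subr_eq0 pnatr_eq1 neq_ltn prime_gt1 ?orbT.
have pm : ((p.-1)%:R : algC) = p%:R - 1 by rewrite -[in RHS](prednK (prime_gt0 hp)) -natr1 addrK.
rewrite /F21.
under eq_bigr do rewrite term_eq //.
rewrite -mulr_sumr exchange_big /=.
under eq_bigr => y _ do rewrite exchange_big /=.
have e : forall y z : 'F_p, \sum_(i : Iirr (FpUnits p))
    qchar y * qchar z * mchar i (y * (1 - y)^-1 * (z * (1 - z)^-1) * x)
  = (p.-1)%:R * (qchar y * qchar z * (y * (1 - y)^-1 * (z * (1 - z)^-1) * x == 1)%:R).
  move=> y z; rewrite -mulr_sumr mchar_sum // -mulr_natr; ring.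
under eq_bigr => y _ do under eq_bigr => z _ do rewrite e.
under eq_bigr => y _ do rewrite -mulr_sumr.
rewrite -mulr_sumr pm; field.
by rewrite p0 p1.
Qed.


Theorem theorem1 (p : nat) (hp : prime p) (hodd : odd p) (a : 'F_p)
  (ha : a ^+ 5 != a) :
  (edwards_card a)%:R = 1 + p%:R + p%:R * F21 (1 - a ^+ 4) :> algC.
Proof.
have a0 : a != 0 by apply: contra ha => /eqP ->; rewrite expr0n.
have a4 : a ^+ 4 != 1 by apply: contra ha => /eqP h; rewrite (exprS a 4) h mulr1.
rewrite card_formula // pF21 //; congr (_ + _).
apply: eq_bigr => y _; rewrite -fiber2 // mulr_sumr; apply: eq_bigr => z _.
by rewrite mulrA.
Qed.
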